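(* Let $A\in\mathbb{R}_+^{n\times n}$ be a nonzero circulant matrix. Then $$x\in\mathrm{Attr}(A)\iff A^{n^2}_{i\bullet}\otimes x=A^{n^2}_{j\bullet}\otimes x\ \text{ for all } i,j\in\{1,\dots,n\}\text{ with }[i]\to_1[j],$$ and $$x\in\mathrm{Attr}(A)\iff A^{n^2}_{i\bullet}\otimes x=A^{n^2}_{j\bullet}\otimes x\ \text{ for all } i,j\in\{1,\dots,n\}\text{ with } i\sim_A j.$$
   Context: Max algebra on $\mathbb{R}_+$: $\oplus=\max$, ordinary product; $A^t$ max-algebraic power, $A^t_{i\bullet}$ its $i$-th row, $A^t_{i\bullet}\otimes x=\max_k (A^t)_{i,k}x_k$. $\lambda(A)$: greatest max-algebraic eigenvalue (maximum cycle geometric mean of the weighted digraph $\mathcal{G}(A)$ with edges $(i,j)$, $A_{i,j}\ne0$). $\mathrm{Attr}(A)=\{x\in\mathbb{R}_+^n: A^{t+1}\otimes x=\lambda(A)A^t\otimes x\text{ for some }t\ge0\}$. The critical digraph $\mathcal{C}(A)$ consists of all nodes and edges of cycles attaining mean $\lambda(A)$; for a nonzero circulant every node is critical and $\mathcal{C}(A)$ is a disjoint union of strongly connected components. $i\sim_A j$ means $i,j$ lie in the same component of $\mathcal{C}(A)$. For a component with cyclicity $\sigma$ (gcd of its cycle lengths), nodes $i,j$ of it are in the same cyclic class if walks in the component from $i$ to $j$ have length divisible by $\sigma$; $[i]$ is the cyclic class of $i$, and $[i]\to_1[j]$ means walks from a member of $[i]$ to a member of $[j]$ (in the same component) have length $\equiv1\pmod\sigma$.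 A circulant matrix has $A_{i,j}=a_t$, $t\equiv j-i\pmod n$. *)

(* Defs.v *)
From HB Require Import structures.
From mathcomp Require Import all_boot all_order all_algebra.
Set Implicit Arguments. Unset Strict Implicit. Unset Printing Implicit Defensive.
Import Order.TTheory GRing.Theory Num.Theory.
Local Open Scope ring_scope.

Section MaxAlg.
Variables (R : rcfType) (n : nat).
Implicit Types (A B : 'M[R]_n) (x : 'I_n -> R) (l : R).

Definition nonneg_mx A : Prop := forall i j, 0 <= A i j.

Definition circulant A : Prop :=
  exists a : nat -> R, forall i j : 'I_n, A i j = a ((j + n - i) %% n)%N.

Definition mmul A B : 'M[R]_n :=
  \matrix_(i, j) \big[Num.max/0]_(k < n) (A i k * B k j).
Definition mpow A (t : nat) : 'M[R]_n := iter t (mmul A) 1%:M.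

Definition mrow A (i : 'I_n) x : R := \big[Num.max/0]_(k < n) (A i k * x k).

(* walks in G(A): i :: p, consecutive nodes joined by edges (A u v <> 0);
   the length of the walk is size p *)
Definition walk A (i : 'I_n) (p : seq 'I_n) : bool := path (fun u v => A u v != 0) i p.
Fixpoint walkw A (i : 'I_n) (p : seq 'I_n) : R :=
  if p is j :: q then A i j * walkw A j q else 1.

Definition cwalk A (i : 'I_n) (p : seq 'I_n) : Prop :=
  [/\ walk A i p, p != [::] & last i p = i].

(* l is the maximum cycle geometric mean of G(A):
   the geometric mean of a cycle of length k and weight w is w^(1/k), and
   w^(1/k) <= l  <->  w <= l^k  for l >= 0. *)
Definition is_lambda A l : Prop :=
  [/\ 0 <= l,
      (forall i p, cwalk A i p -> walkw A i p <= l ^+ size p) &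
      exists i p, cwalk A i p /\ walkw A i p = l ^+ size p].

Definition crit_cycle A l (i : 'I_n) (p : seq 'I_n) : Prop :=
  cwalk A i p /\ walkw A i p = l ^+ size p.
Definition crit_node A l (u : 'I_n) : Prop :=
  exists i p, crit_cycle A l i p /\ u \in i :: p.
Definition crit_edge A l (u v : 'I_n) : Prop :=
  exists i p, crit_cycle A l i p /\ exists p1 p2, i :: p = p1 ++ [:: u, v & p2].

Fixpoint cwalk_in A l (u : 'I_n) (p : seq 'I_n) : Prop :=
  if p is w :: q then crit_edge A l u w /\ cwalk_in A l w q else True.
Definition crit_walk A l (u v : 'I_n) (p : seq 'I_n) : Prop :=
  cwalk_in A l u p /\ last u p = v.

Definition simA A l (i j : 'I_n) : Prop :=
  [/\ crit_node A l i, crit_node A l j,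
      (exists p, crit_walk A l i j p) & (exists p, crit_walk A l j i p)].

Definition cyc_div A l (i : 'I_n) (d : nat) : Prop :=
  forall u p, simA A l i u -> crit_walk A l u u p -> p != [::] -> (d %| size p)%N.
Definition is_cyclicity A l (i : 'I_n) (s : nat) : Prop :=
  cyc_div A l i s /\ forall d, cyc_div A l i d -> (d %| s)%N.

Definition to1 A l (i j : 'I_n) : Prop :=
  simA A l i j /\
  forall s, is_cyclicity A l i s ->
    forall p, crit_walk A l i j p -> size p = 1 %[mod s].

(* attraction set (x is assumed in R_+^n separately) *)
Definition in_attr A l x : Prop :=
  exists t, forall i, mrow (mpow A t.+1) i x = l * mrow (mpow A t) i x.

End MaxAlg.

(* Main.v *)
Require Import Defs.
From HB Require Import structures.
From mathcomp Require Import all_boot all_order all_algebra.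
From mathcomp Require Import zify ring lra.
Import Order.TTheory GRing.Theory Num.Theory.
Local Open Scope ring_scope.
Set Implicit Arguments. Unset Strict Implicit. Unset Printing Implicit Defensive.

Section BMax.
Variable R : realFieldType.

Lemma bmax_le (I : Type) (r : seq I) (F : I -> R) c :
  0 <= c -> (forall i, F i <= c) -> \big[Num.max/0]_(i <- r) F i <= c.
Proof.
move=> c0 HF; elim: r => [|x r IH]; rewrite ?big_nil ?big_cons //.
by rewrite ge_max HF IH.
Qed.

Lemma le_bmax (I : eqType) (r : seq I) (F : I -> R) i :
  i \in r -> F i <= \big[Num.max/0]_(j <- r) F j.
Proof.
elim: r => [|x r IH] //; rewrite in_cons big_cons => /orP [/eqP ->|H].
  by rewrite le_max lexx.
by rewrite le_max IH ?orbT.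
Qed.

Lemma bmax_ge0 (I : Type) (r : seq I) (F : I -> R) :
  0 <= \big[Num.max/0]_(i <- r) F i.
Proof.
elim: r => [|x r IH]; rewrite ?big_nil ?big_cons //.
by rewrite le_max IH orbT.
Qed.

Lemma bmax_att (I : eqType) (r : seq I) (F : I -> R) :
  \big[Num.max/0]_(i <- r) F i <= 0 \/
  exists i, i \in r /\ \big[Num.max/0]_(j <- r) F j = F i.
Proof.
elim: r => [|x r IH]; rewrite ?big_nil ?big_cons; first by left.
case: (leP (F x) (\big[Num.max/0]_(j <- r) F j)) => H.
  case: IH => [H1|[i [Hi E]]]; first by left.
  by right; exists i; rewrite in_cons Hi orbT.
by right; exists x; rewrite mem_head.
Qed.

Lemma bmax_mull (I : Type) (r : seq I) (F : I -> R) c :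
  0 <= c -> c * \big[Num.max/0]_(i <- r) F i = \big[Num.max/0]_(i <- r) (c * F i).
Proof.
move=> c0; elim: r => [|x r IH]; rewrite ?big_nil ?big_cons ?mulr0 //.
by rewrite maxr_pMr // IH.
Qed.

Lemma bmax_mulr (I : Type) (r : seq I) (F : I -> R) c :
  0 <= c -> \big[Num.max/0]_(i <- r) F i * c = \big[Num.max/0]_(i <- r) (F i * c).
Proof.
move=> c0; elim: r => [|x r IH]; rewrite ?big_nil ?big_cons ?mul0r //.
by rewrite maxr_pMl // IH.
Qed.

End BMax.

Section Circ.
Variables (R : rcfType) (n : nat) (A : 'M[R]_n) (a : nat -> R).
Hypothesis Ha : forall i j : 'I_n, A i j = a ((j + n - i) %% n)%N.
Hypothesis Hnn : nonneg_mx A.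
Hypothesis n_gt0 : (0 < n)%N.

Definition M := \big[Num.max/0]_(r < n) a r.
Definition wt (s : seq nat) : R := \prod_(u <- s) a (u %% n).
Definition sh (c : nat) (i : 'I_n) : 'I_n := Ordinal (ltn_pmod (i + c)%N n_gt0).

Lemma md1 (i u : nat) : (i < n)%N -> (((i + u) %% n + n - i) %% n = u %% n)%N.
Proof.
move=> Hi; apply/eqP; rewrite -(eqn_modDr i) subnK; last first.
  by apply: leq_trans (ltnW Hi) (leq_addl _ _).
by rewrite modnDr modn_mod addnC.
Qed.

Lemma A_sh t (i : 'I_n) : A i (sh t i) = a (t %% n)%N.
Proof. by rewrite Ha /= md1. Qed.

Lemma a_nn u : 0 <= a (u %% n)%N.
Proof. rewrite -(A_sh u (Ordinal n_gt0)); exact: Hnn. Qed.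

Lemma a_le_M u : a (u %% n)%N <= M.
Proof.
rewrite /M; apply: (le_bmax (fun r : 'I_n => a r) (i := Ordinal (ltn_pmod u n_gt0))).
exact: mem_index_enum.
Qed.

Lemma M_ge0 : 0 <= M.
Proof. exact: bmax_ge0. Qed.

Lemma A_le_M i j : A i j <= M.
Proof. by rewrite Ha -modn_mod a_le_M. Qed.

Lemma mpowS k : mpow A k.+1 = mmul A (mpow A k).
Proof. by []. Qed.

Lemma mpow_nn k i j : 0 <= mpow A k i j.
Proof.
case: k => [|k]; first by rewrite /mpow /= mxE ler0n.
by rewrite mpowS /mmul mxE bmax_ge0.
Qed.

Lemma wt_ge0 s : 0 <= wt s.
Proof.
elim: s => [|u s IH]; rewrite /wt ?big_nil ?big_cons //.
by rewrite mulr_ge0 // a_nn.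
Qed.

Lemma wt_le s : wt s <= M ^+ size s.
Proof.
elim: s => [|u s IH]; rewrite /wt ?big_nil ?big_cons //= exprS.
by rewrite ler_pM ?a_nn ?wt_ge0 ?a_le_M.
Qed.

Lemma wt_cat s1 s2 : wt (s1 ++ s2) = wt s1 * wt s2.
Proof. by rewrite /wt big_cat. Qed.

Lemma wt_nseq m t : (t < n)%N -> a t = M -> wt (nseq m t) = M ^+ m.
Proof.
move=> Ht HM; elim: m => [|m IH]; rewrite /wt ?big_nil //= big_cons.
by rewrite -/(wt _) IH modn_small // HM exprS.
Qed.

Lemma lb k s (i j : 'I_n) : size s = k -> ((i + sumn s) %% n)%N = j :> nat ->
  wt s <= mpow A k i j.
Proof.
elim: s k i => [|u s IH] k i /=.
  move=> <-; rewrite addn0 modn_small // => Hij.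
  have -> : j = i by apply/val_inj.
  by rewrite /mpow /= mxE eqxx /wt big_nil.
case: k => [|k] // [Hk] Hend.
rewrite mpowS /mmul mxE.
apply: le_trans (le_bmax (fun m => A i m * mpow A k m j) (i := sh u i) (mem_index_enum _)).
rewrite /wt big_cons -/(wt s) A_sh ler_pM ?a_nn ?wt_ge0 //.
apply: IH => //=; by rewrite modnDml -addnA.
Qed.

Lemma att k (i j : 'I_n) : mpow A k i j <= 0 \/
  exists s, [/\ size s = k, ((i + sumn s) %% n)%N = j :> nat & mpow A k i j <= wt s].
Proof.
elim: k i j => [|k IH] i j.
  rewrite /mpow /= mxE; case: (eqVneq i j) => [<-|_] /=; last by left.
  by right; exists [::]; rewrite addn0 modn_small // /wt big_nil.
rewrite mpowS /mmul mxE.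
have [H|[m [_ Hm]]] := bmax_att (index_enum 'I_n) (fun m => A i m * mpow A k m j).
  by left.
rewrite Hm.
case: (IH m j) => [H0|[s [Hs Hend Hle]]].
  by left; rewrite mulr_ge0_le0 // Hnn.
right; exists (((m + n - i) %% n)%N :: s); split => //=; first by rewrite Hs.
  rewrite addnA -modnDml modnDmr subnKC; last first.
    by apply: leq_trans (ltnW (ltn_ord i)) (leq_addl _ _).
  by rewrite modnDml addnAC modnDr.
rewrite /wt big_cons -/(wt s) modn_mod -Ha.
by rewrite ler_wpM2l ?Hnn.
Qed.


Lemma shrink s t : (n <= size s)%N -> (t < n)%N -> a t = M ->
  exists s', [/\ size s' = (size s).-1,
     ((sumn s' + t) %% n = sumn s %% n)%N & wt s <= M * wt s'].
Proof.
move=> Hsz Ht HM.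
pose f (p : 'I_(size s).+1) : 'I_n :=
  Ordinal (ltn_pmod (sumn (take p s) + (size s - p) * t)%N n_gt0).
have [p [q [Hpq Efpq]]] : exists p q : 'I_(size s).+1, (p < q)%N /\ f p = f q.
  case: (boolP [exists p, exists q, (p != q) && (f p == f q)]) =>
      [/existsP [p /existsP [q /andP [Hne /eqP E]]]|Hno].
    case: (ltngtP p q) => H.
    - by exists p, q.
    - by exists q, p.
    - by rewrite (val_inj H) eqxx in Hne.
  have Hinj : injective f.
    move=> p q E; apply/eqP; apply/negPn/negP => Hne; move/negP: Hno; apply.
    by apply/existsP; exists p; apply/existsP; exists q; rewrite Hne E eqxx.
  have := leq_card f Hinj; rewrite !card_ord => H.
  by have := leq_trans H Hsz; rewrite ltnn.
have Hq : (q <= size s)%N by rewrite -ltnS ltn_ord.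
have Ef : ((sumn (take p s) + (size s - p) * t) %% n
          = (sumn (take q s) + (size s - q) * t) %% n)%N.
  by have := congr1 val Efpq.
set blk := take (q - p) (drop p s).
have Htq : take q s = take p s ++ blk by rewrite -takeD subnKC // ltnW.
have Hsub : (size s - p = (size s - q) + (q - p))%N by lia.
have Eblk : ((q - p) * t %% n = sumn blk %% n)%N.
  apply/eqP; rewrite -(eqn_modDl (sumn (take p s) + (size s - q) * t)); apply/eqP.
  move: Ef; rewrite Htq sumn_cat Hsub mulnDl.
  by move=> E; rewrite -addnA E addnAC.
have Hqp : (q - p = (q - p).-1.+1)%N by rewrite prednK // subn_gt0.
exists (take p s ++ nseq (q - p).-1 t ++ drop q s); split.
- rewrite !size_cat size_nseq size_drop size_takel; last by apply: ltnW; apply: leq_trans Hpq Hq.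
  lia.
- rewrite !sumn_cat sumn_nseq.
  have -> : (sumn (take p s) + (t * (q - p).-1 + sumn (drop q s)) + t
            = sumn (take p s) + sumn (drop q s) + (q - p) * t)%N.
    by rewrite {2}Hqp; ring.
  have -> : sumn s = (sumn (take p s) + sumn blk + sumn (drop q s))%N.
    by rewrite -{1}(cat_take_drop q s) sumn_cat Htq sumn_cat.
  by rewrite -modnDmr Eblk modnDmr addnAC.
- rewrite -{1}(cat_take_drop q s) Htq !wt_cat wt_nseq //.
  have Hb : wt blk <= M ^+ (q - p).
    have := wt_le blk; rewrite size_takel // size_drop.
    by apply: leq_sub2r.
  apply: (@le_trans _ _ (wt (take p s) * M ^+ (q - p) * wt (drop q s))).
    by rewrite ler_wpM2r ?wt_ge0 // ler_wpM2l ?wt_ge0.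
  by rewrite {1}Hqp exprS le_eqVlt; apply/orP; left; apply/eqP; ring.
Qed.

Lemma F1e k t (i j : 'I_n) : (n <= k.+1)%N -> (t < n)%N -> a t = M ->
  mpow A k.+1 i j = M * mpow A k (sh t i) j.
Proof.
move=> Hk Ht HM; apply/le_anti/andP; split; last first.
  rewrite mpowS /mmul mxE -HM.
  have := le_bmax (fun m => A i m * mpow A k m j) (i := sh t i) (mem_index_enum _).
  by rewrite A_sh modn_small.
case: (att k.+1 i j) => [H0|[s [Hs Hend Hle]]].
  by apply: le_trans H0 _; rewrite mulr_ge0 ?M_ge0 ?mpow_nn.
have Hsz : (n <= size s)%N by rewrite Hs.
have [s' [Hs' Hsum Hw]] := shrink Hsz Ht HM.
apply: le_trans Hle _; apply: le_trans Hw _.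
rewrite ler_wpM2l ?M_ge0 //; apply: lb; first by rewrite Hs' Hs.
by rewrite /= modnDml -addnA (addnC t) -modnDmr Hsum modnDmr.
Qed.

Lemma F1r k t i (x : 'I_n -> R) : (n <= k.+1)%N -> (t < n)%N -> a t = M ->
  mrow (mpow A k.+1) i x = M * mrow (mpow A k) (sh t i) x.
Proof.
move=> Hk Ht HM; rewrite /mrow bmax_mull ?M_ge0 //.
by apply: eq_bigr => c _; rewrite (F1e (t := t)) // mulrA.
Qed.

Lemma assoc k i (x : 'I_n -> R) : (forall c, 0 <= x c) ->
  mrow (mpow A k.+1) i x = \big[Num.max/0]_(m < n) (A i m * mrow (mpow A k) m x).
Proof.
move=> Hx; apply/le_anti/andP; split.
  apply: bmax_le; first exact: bmax_ge0.
  move=> c; rewrite mpowS /mmul mxE bmax_mulr //.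
  apply: bmax_le; first exact: bmax_ge0.
  move=> m; apply: le_trans (le_bmax _ (i := m) (mem_index_enum _)).
  rewrite -mulrA ler_wpM2l ?Hnn //.
  exact: (le_bmax (fun c => mpow A k m c * x c) (i := c) (mem_index_enum _)).
apply: bmax_le; first exact: bmax_ge0.
move=> m; rewrite /mrow bmax_mull ?Hnn //.
apply: bmax_le; first exact: bmax_ge0.
move=> c; apply: le_trans (le_bmax _ (i := c) (mem_index_enum _)).
rewrite mpowS /mmul mxE mulrA ler_wpM2r //.
exact: (le_bmax (fun m => A i m * mpow A k m c) (i := m) (mem_index_enum _)).
Qed.


Lemma iter_sh m t i : val (iter m (sh t) i) = ((i + m * t) %% n)%N.
Proof.
elim: m => [|m IH] /=; first by rewrite addn0 modn_small.
by rewrite IH modnDml mulSn (addnC t) addnA.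
Qed.

Lemma iter_sh_Mn m t i : iter (m * n) (sh t) i = i.
Proof.
apply/val_inj; rewrite iter_sh mulnAC addnC modnMDl modn_small //.
Qed.

Lemma sh_inj t : injective (sh t).
Proof.
move=> p q /(congr1 val) /= /eqP; rewrite eqn_modDr => /eqP.
by rewrite !modn_small // => E; apply: val_inj.
Qed.

Lemma A_sh' t i : (t < n)%N -> A i (sh t i) = a t.
Proof. by move=> Ht; rewrite A_sh modn_small. Qed.

Lemma traject_pred (T : Type) (f : T -> T) x m : (0 < m)%N ->
  traject f x m = x :: traject f (f x) m.-1.
Proof. by case: m. Qed.

Lemma walkw_traj m t i : (t < n)%N -> a t = M ->
  walkw A i (traject (sh t) (sh t i) m) = M ^+ m.
Proof.
move=> Ht HM; elim: m i => [|m IH] i //=.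
by rewrite A_sh' // HM IH exprS.
Qed.

Lemma cyc_traj t i : 0 < M -> (t < n)%N -> a t = M ->
  cwalk A i (traject (sh t) (sh t i) n).
Proof.
move=> Mpos Ht HM; split.
- rewrite /walk; apply: (sub_path _ (fpath_traject (sh t) i n)) => u v /eqP <-.
  by rewrite A_sh' // HM gt_eqF.
- by rewrite -size_eq0 size_traject -lt0n.
- by rewrite last_traject; have := iter_sh_Mn 1 t i; rewrite mul1n.
Qed.

Lemma walkw_ge0 i p : 0 <= walkw A i p.
Proof. by elim: p i => [|j p IH] i //=; rewrite mulr_ge0 ?Hnn. Qed.

Lemma walkw_le i p : walkw A i p <= M ^+ size p.
Proof.
elim: p i => [|j p IH] i //=; rewrite exprS.
by rewrite ler_pM ?Hnn ?walkw_ge0 ?A_le_M.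
Qed.

Lemma M_pos : A != 0 -> 0 < M.
Proof.
move=> Anz.
case: (boolP [exists i, exists j, A i j != 0]) =>
  [/existsP [i /existsP [j Hij]]|Hno]; last first.
  move/negP: Anz; case; apply/eqP/matrixP => i j; rewrite mxE.
  apply/eqP; apply/negPn/negP => Hne; move/negP: Hno; apply.
  by apply/existsP; exists i; apply/existsP; exists j.
apply: (@lt_le_trans _ _ (A i j)); first by rewrite lt_neqAle eq_sym Hij Hnn.
exact: A_le_M.
Qed.

Lemma l_eq l t : is_lambda A l -> 0 < M -> (t < n)%N -> a t = M -> l = M.
Proof.
move=> [l0 Hc [i [p [Hcw Hw]]]] Mpos Ht HM.
apply/le_anti/andP; split.
  have Hp : (0 < size p)%N by case: Hcw => _ Hne _; rewrite lt0n size_eq0.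
  by rewrite -(ler_pXn2r Hp) ?nnegrE ?M_ge0 // -Hw walkw_le.
have := Hc _ _ (cyc_traj (Ordinal n_gt0) Mpos Ht HM).
by rewrite walkw_traj // size_traject ler_pXn2r ?nnegrE ?M_ge0.
Qed.

Lemma fac2 (x w Q : R) : 0 < M -> 0 <= x -> x <= M -> 0 <= w -> w <= Q -> 0 < Q ->
  x * w = M * Q -> x = M /\ w = Q.
Proof. move=> *; split; nra. Qed.

Lemma crit_fac p1 u v p2 : 0 < M -> forall i p, i :: p = p1 ++ [:: u, v & p2] ->
  walkw A i p = M ^+ size p -> A u v = M.
Proof.
move=> Mpos; elim: p1 => [|y p1 IH] i p /=.
  case=> -> -> /=; rewrite exprS => E.
  have := fac2 Mpos (Hnn u v) (A_le_M u v) (walkw_ge0 v p2) (walkw_le v p2)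
    (exprn_gt0 _ Mpos) E.
  by case.
case=> _ Ep; case: p Ep => [|z q] Ep; first by case: p1 {IH} Ep.
rewrite /= exprS => E.
have [_ E2] := fac2 Mpos (Hnn i z) (A_le_M i z) (walkw_ge0 z q) (walkw_le z q)
    (exprn_gt0 _ Mpos) E.
exact: (IH z q Ep E2).
Qed.


Lemma crit_edge_M l u v : 0 < M -> l = M -> crit_edge A l u v -> A u v = M.
Proof. by move=> Mpos -> [i [p [[Hcw Hw] [p1 [p2 E]]]]]; exact: (crit_fac Mpos E Hw). Qed.

Lemma crit_cyc_traj t u : 0 < M -> (t < n)%N -> a t = M ->
  crit_cycle A M u (traject (sh t) (sh t u) n).
Proof.
by move=> Mpos Ht HM; split; [exact: cyc_traj | rewrite walkw_traj // size_traject].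
Qed.

Lemma crit_edge_sh t u : 0 < M -> (t < n)%N -> a t = M -> crit_edge A M u (sh t u).
Proof.
move=> Mpos Ht HM; exists u, (traject (sh t) (sh t u) n); split.
  exact: crit_cyc_traj.
exists [::], (traject (sh t) (sh t (sh t u)) n.-1).
by rewrite (traject_pred _ _ n_gt0).
Qed.

Lemma crit_node_all t u : 0 < M -> (t < n)%N -> a t = M -> crit_node A M u.
Proof.
move=> Mpos Ht HM; exists u, (traject (sh t) (sh t u) n); split.
  exact: crit_cyc_traj.
exact: mem_head.
Qed.

Lemma cwin_traj t u m : 0 < M -> (t < n)%N -> a t = M ->
  cwalk_in A M u (traject (sh t) (sh t u) m).
Proof.
move=> Mpos Ht HM; elim: m u => [|m IH] u //=; split; [exact: crit_edge_sh | exact: IH].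
Qed.

Lemma cwin_cat l u p q : cwalk_in A l u (p ++ q) <->
  cwalk_in A l u p /\ cwalk_in A l (last u p) q.
Proof.
elim: p u => [|w p IH] u /=; first by split => [H|[_ H]].
split => [[H1 H2]|[[H1 H2] H3]].
  by have [H3 H4] := (IH w).1 H2.
by split => //; apply/(IH w).
Qed.

Lemma walk_Q (Q : 'I_n -> R) : 0 < M ->
  (forall u y, (u < n)%N -> a u = M -> Q (sh u y) = Q y) ->
  forall i p, cwalk_in A M i p -> Q (last i p) = Q i.
Proof.
move=> Mpos HQ i p; elim: p i => [|w p IH] i //= [He Hp].
rewrite IH //.
have := crit_edge_M Mpos erefl He; rewrite Ha => Hw.
have -> : w = sh ((w + n - i) %% n)%N i.
  apply/val_inj => /=; rewrite modnDmr subnKC ?modnDr ?modn_small //.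
  by apply: leq_trans (ltnW (ltn_ord i)) (leq_addl _ _).
by apply: HQ => //; apply: ltn_pmod.
Qed.

Lemma crit_walk_cyc t i : 0 < M -> (t < n)%N -> a t = M ->
  crit_walk A M i i (traject (sh t) (sh t i) n).
Proof.
move=> Mpos Ht HM; split; first exact: cwin_traj.
by rewrite last_traject; have := iter_sh_Mn 1 t i; rewrite mul1n.
Qed.

Lemma to1_sh t i : 0 < M -> (t < n)%N -> a t = M -> to1 A M i (sh t i).
Proof.
move=> Mpos Ht HM.
have back : crit_walk A M (sh t i) i (traject (sh t) (sh t (sh t i)) n.-1).
  split; first exact: cwin_traj.
  rewrite last_traject -iterSr prednK //.
  by have := iter_sh_Mn 1 t i; rewrite mul1n.
have fwd : crit_walk A M i (sh t i) [:: sh t i].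
  by split => //=; split => //; exact: crit_edge_sh.
have Hsim : simA A M i (sh t i).
  split; [exact: (crit_node_all _ Mpos Ht HM) | exact: (crit_node_all _ Mpos Ht HM)
         | by exists [:: sh t i] | by eexists; exact: back].
split => // s [Hdiv _] p [Hp Hl].
have Hii : simA A M i i.
  by split; [exact: (crit_node_all _ Mpos Ht HM) | exact: (crit_node_all _ Mpos Ht HM)
            | exists [::] | exists [::]].
have Hn : (s %| n)%N.
  have := Hdiv i _ Hii (crit_walk_cyc i Mpos Ht HM).
  rewrite size_traject; apply; by rewrite -size_eq0 size_traject -lt0n.
have Hq : (s %| size p + n.-1)%N.
  set q := p ++ traject (sh t) (sh t (sh t i)) n.-1.
  have Hsz : size q = (size p + n.-1)%N by rewrite size_cat size_traject.
  have Hw : crit_walk A M i i q.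
    split.
      by apply/cwin_cat; split => //; rewrite Hl; case: back.
    by rewrite last_cat Hl; case: back.
  case: (eqVneq q [::]) => Hq0.
    by rewrite -Hsz Hq0 dvdn0.
  by rewrite -Hsz; apply: (Hdiv i q Hii Hw Hq0).
have E1 : ((size p + n) %% s = size p %% s)%N.
  by rewrite -modnDmr (eqP Hn) addn0.
have E2 : ((size p + n.-1 + 1) %% s = 1 %% s)%N.
  by rewrite -modnDml; move: Hq; rewrite /dvdn => /eqP ->.
have E3 : (size p + n = size p + n.-1 + 1)%N by rewrite -addnA addn1 prednK.
by rewrite -E1 E3 E2.
Qed.


Lemma main_in l (x : 'I_n -> R) : A != 0 -> is_lambda A l -> (forall k, 0 <= x k) ->
  (in_attr A l x <->
     (forall i j, to1 A l i j ->
        mrow (mpow A (n ^ 2)%N) i x = mrow (mpow A (n ^ 2)%N) j x)) /\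
  (in_attr A l x <->
     (forall i j, simA A l i j ->
        mrow (mpow A (n ^ 2)%N) i x = mrow (mpow A (n ^ 2)%N) j x)).
Proof.
move=> Anz Hl Hx.
have Mpos := M_pos Anz.
have Mne0 : M != 0 := lt0r_neq0 Mpos.
have [t [Ht HM]] : exists t, (t < n)%N /\ a t = M.
  have [H|[r [_ Er]]] := bmax_att (index_enum 'I_n) (fun r : 'I_n => a r).
    by have := lt_le_trans Mpos H; rewrite ltxx.
  by exists r; split => //; rewrite /M Er.
have El := l_eq Hl Mpos Ht HM; subst l.
have hN : (n <= n ^ 2)%N by rewrite expnS expn1 leq_pmulr.
have I1 : in_attr A M x -> forall u y, (u < n)%N -> a u = M ->
    mrow (mpow A (n ^ 2)%N) (sh u y) x = mrow (mpow A (n ^ 2)%N) y x.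
  move=> [t0 Ht0] u y Hu Hau.
  have Hprop : forall m i, mrow (mpow A (m + t0).+1) i x = M * mrow (mpow A (m + t0)) i x.
    elim=> [|m IH] i; first exact: Ht0.
    rewrite addSn (assoc (m + t0).+1 i Hx) (assoc (m + t0) i Hx) bmax_mull ?M_ge0 //.
    by apply: eq_bigr => m' _; rewrite IH mulrCA.
  have Hdesc : forall m i, mrow (mpow A (m + n ^ 2)) i x =
      M ^+ m * mrow (mpow A (n ^ 2)) (iter m (sh u) i) x.
    elim=> [|m IH] i; first by rewrite add0n expr0 mul1r.
    rewrite addSn (F1r (t := u)) //; last first.
      by apply: leq_trans hN _; apply: ltnW; rewrite ltnS leq_addl.
    by rewrite IH mulrA -exprS iterSr.
  have E1 : forall i, mrow (mpow A (t0 + n ^ 2)) (sh u i) x = mrow (mpow A (t0 + n ^ 2)) i x.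
    move=> i; apply: (mulfI Mne0).
    rewrite -(F1r (t := u)) //; last first.
      by apply: leq_trans hN _; apply: ltnW; rewrite ltnS leq_addl.
    by rewrite addnC Hprop.
  have E2 : forall i, mrow (mpow A (n ^ 2)) (sh u (iter t0 (sh u) i)) x =
      mrow (mpow A (n ^ 2)) (iter t0 (sh u) i) x.
    move=> i; have := E1 i; rewrite !Hdesc -iterSr iterS.
    exact: (mulfI (expf_neq0 t0 Mne0)).
  have := E2 (iter (t0 * n.-1) (sh u) y).
  by rewrite -iterD -mulnS prednK // iter_sh_Mn.
have I2 : (forall y, mrow (mpow A (n ^ 2)%N) (sh t y) x = mrow (mpow A (n ^ 2)%N) y x) ->
    in_attr A M x.
  move=> H; exists (n ^ 2)%N => i; rewrite (F1r (t := t)) // ?H //.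
  exact: leq_trans hN (leqnSn _).
split; split.
- move=> Hat i j [[_ _ [p [Hp Hlast]] _] _]; rewrite -Hlast; symmetry.
  exact: (walk_Q (Q := fun i => mrow (mpow A (n ^ 2)%N) i x) Mpos (I1 Hat) Hp).
- move=> H; apply: I2 => y; symmetry; exact: H (to1_sh y Mpos Ht HM).
- move=> Hat i j [_ _ [p [Hp Hlast]] _]; rewrite -Hlast; symmetry.
  exact: (walk_Q (Q := fun i => mrow (mpow A (n ^ 2)%N) i x) Mpos (I1 Hat) Hp).
- move=> H; apply: I2 => y; symmetry; exact: H (to1_sh y Mpos Ht HM).1.
Qed.

End Circ.


Theorem proposition5 (R : rcfType) (n : nat) (A : 'M[R]_n) (l : R) :
  nonneg_mx A -> circulant A -> A != 0 -> is_lambda A l ->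
  forall x : 'I_n -> R, (forall k, 0 <= x k) ->
  (in_attr A l x <->
     (forall i j, to1 A l i j ->
        mrow (mpow A (n ^ 2)%N) i x = mrow (mpow A (n ^ 2)%N) j x)) /\
  (in_attr A l x <->
     (forall i j, simA A l i j ->
        mrow (mpow A (n ^ 2)%N) i x = mrow (mpow A (n ^ 2)%N) j x)).
Proof.
move=> Hnn [a Ha] Anz Hl x Hx.
have n_gt0 : (0 < n)%N.
  rewrite lt0n; apply/negP => /eqP n0; move/negP: Anz; apply.
  by apply/eqP/matrixP => i; have := ltn_ord i; rewrite {2}n0.
exact: (main_in Ha Hnn n_gt0 Anz Hl Hx).
Qed.
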